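(* Let $\mathbf{A}\in\mathbb{R}^{M\times N}$, $\mathbf{Y}\in\mathbb{R}^{M\times L}$, and let $(\mathbf{g}(t),\mathbf{V}(t))\in\mathbb{R}^N\times\mathbb{R}^{N\times L}$, $t\ge 0$, evolve under the continuous gradient flow of $\mathcal{L}(\mathbf{g},\mathbf{V})=\Vert\mathbf{Y}-\mathbf{A}((\mathbf{g}^{\odot 2}\mathbf{1}_L)\odot\mathbf{V})\Vert_F^2$. Then for every $t\ge0$: (1) (global balancedness) $\frac12\Vert\mathbf{g}(t)\Vert_2^2-\Vert\mathbf{V}(t)\Vert_F^2=\frac12\Vert\mathbf{g}(0)\Vert_2^2-\Vert\mathbf{V}(0)\Vert_F^2$; (2) (row-wise balancedness) for each $i\in[N]$, $\frac12 g_i^2(t)-\sum_{j\in[L]}V_{ij}^2(t)=\frac12 g_i^2(0)-\sum_{j\in[L]}V_{ij}^2(0)$.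
   Context: $\odot$ denotes the entrywise product, $\mathbf{g}^{\odot2}$ the entrywise square, $\mathbf{1}_L$ the $1\times L$ all-ones row vector, so the matrix $(\mathbf{g}^{\odot 2}\mathbf{1}_L)\odot\mathbf{V}$ has entries $g_i^2V_{ij}$. Gradient flow means $\frac{d}{dt}g_l(t)=-\frac{\partial\mathcal{L}}{\partial g_l}(\mathbf g(t),\mathbf V(t))$ and $\frac{d}{dt}V_{lm}(t)=-\frac{\partial\mathcal{L}}{\partial V_{lm}}(\mathbf g(t),\mathbf V(t))$ for all $l\in[N]$, $m\in[L]$. *)

(* Defs.v *)
From HB Require Import structures.
From mathcomp Require Import all_boot all_order all_algebra.
From mathcomp Require Import all_classical all_reals all_analysis.
Set Implicit Arguments. Unset Strict Implicit. Unset Printing Implicit Defensive.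
Import Order.TTheory GRing.Theory Num.Theory.
Import numFieldNormedType.Exports.
Local Open Scope classical_set_scope.
Local Open Scope ring_scope.

(* L(g,V) = || Y - A ((g^{.2} 1_L) .* V) ||_F^2, written out entrywise:
   ((g^{.2} 1_L) .* V)_{kj} = g_k^2 V_{kj}. *)
Definition loss (R : realType) (M N L : nat) (A : 'M[R]_(M, N)) (Y : 'M[R]_(M, L))
  (g : 'I_N -> R) (V : 'I_N -> 'I_L -> R) : R :=
  \sum_(m < M) \sum_(j < L)
     (Y m j - \sum_(k < N) A m k * (g k ^+ 2 * V k j)) ^+ 2.

Definition dL_dg (R : realType) (M N L : nat) (A : 'M[R]_(M, N)) (Y : 'M[R]_(M, L))
  (g : 'I_N -> R) (V : 'I_N -> 'I_L -> R) (l : 'I_N) : R :=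
  derive1 (fun s : R => loss A Y (fun k => if k == l then s else g k) V) (g l).

Definition dL_dV (R : realType) (M N L : nat) (A : 'M[R]_(M, N)) (Y : 'M[R]_(M, L))
  (g : 'I_N -> R) (V : 'I_N -> 'I_L -> R) (l : 'I_N) (m : 'I_L) : R :=
  derive1 (fun s : R => loss A Y g
      (fun k j => if (k == l) && (j == m) then s else V k j)) (V l m).

Definition gradient_flow (R : realType) (M N L : nat) (A : 'M[R]_(M, N))
  (Y : 'M[R]_(M, L)) (g : 'I_N -> R -> R) (V : 'I_N -> 'I_L -> R -> R) : Prop :=
  (forall l, {within `[0, +oo[, continuous (g l)}) /\
  (forall l m, {within `[0, +oo[, continuous (V l m)}) /\
  (forall t : R, 0 < t -> forall l,
     derivable (g l) t 1 /\
     derive1 (g l) t = - dL_dg A Y (fun k => g k t) (fun k j => V k j t) l) /\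
  (forall t : R, 0 < t -> forall l m,
     derivable (V l m) t 1 /\
     derive1 (V l m) t = - dL_dV A Y (fun k => g k t) (fun k j => V k j t) l m).

(* Main.v *)
Require Import Defs.
From HB Require Import structures.
From mathcomp Require Import all_boot all_order all_algebra.
From mathcomp Require Import all_classical all_reals all_analysis.
From mathcomp Require Import ring lra.
Import Order.TTheory GRing.Theory Num.Theory.
Import numFieldNormedType.Exports.
Local Open Scope classical_set_scope.
Local Open Scope ring_scope.
Set Implicit Arguments. Unset Strict Implicit.
Section S.
Variable R : realType.
Implicit Types (f : R -> R) (x df : R).
Lemma d_sumf n (h : 'I_n -> R -> R) x (dh : 'I_n -> R) :
  (forall i, is_derive x 1 (h i) (dh i)) ->
  is_derive x 1 (fun s => \sum_(i < n) h i s) (\sum_(i < n) dh i).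
Proof. by move=> H; rewrite -fct_sumE; apply: is_derive_sum. Qed.
Lemma d_sq f x df : is_derive x 1 f df ->
  is_derive x 1 (fun s => f s ^+ 2) (2 * f x * df).
Proof.
move=> H; have := is_deriveM H H.
have -> : (f * f) = (fun s => f s ^+ 2) by apply/funext => s; rewrite expr2.
by move=> H2; apply: is_derive_eq; rewrite /GRing.scale /=; ring.
Qed.
Lemma d_cmul f x df c : is_derive x 1 f df ->
  is_derive x 1 (fun s => c * f s) (c * df).
Proof.
move=> H; have := is_deriveZ c H.
have -> : (c \*: f) = (fun s => c * f s) by apply/funext.
by [].
Qed.
Lemma d_csub f x df c : is_derive x 1 f df ->
  is_derive x 1 (fun s => c - f s) (- df).
Proof.
move=> H; have := is_deriveB (is_derive_cst c x 1) H.
have -> : (cst c - f) = (fun s => c - f s) by apply/funext.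
by rewrite sub0r.
Qed.
Lemma d_id x : is_derive x 1 (fun s : R => s) 1.
Proof. exact: (@is_derive_id _ R^o x 1). Qed.
Lemma d_cst x c : is_derive x 1 (fun s : R => (c : R)) (0 : R).
Proof. exact: (@is_derive_cst _ R^o R^o c x 1). Qed.
Lemma d_mulc f x df c : is_derive x 1 f df ->
  is_derive x 1 (fun s => f s * c) (df * c).
Proof.
move=> H; have := @d_cmul f x df c H.
have -> : (fun s => c * f s) = (fun s => f s * c) by apply/funext=> s; rewrite mulrC.
by rewrite mulrC.
Qed.

End S.
Section T.
Variables (R : realType) (M N L : nat) (A : 'M[R]_(M, N)) (Y : 'M[R]_(M, L)).
Definition res (g : 'I_N -> R) (V : 'I_N -> 'I_L -> R) m j :=
  Y m j - \sum_(k < N) A m k * (g k ^+ 2 * V k j).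

Lemma dg_val g V l : dL_dg A Y g V l =
  \sum_(m < M) \sum_(j < L) 2 * res g V m j * (- (A m l * (2 * g l * V l j))).
Proof.
have Hq k : is_derive (g l) 1 (fun s : R => if k == l then s else g k)
   (if k == l then 1 else 0 : R).
  by case: (k == l); [apply: d_id | apply: d_cst].
have := d_sumf (fun m => d_sumf (fun j => d_sq (d_csub (Y m j)
   (d_sumf (fun k => d_cmul (A m k) (d_mulc (V k j) (d_sq (Hq k)))))))).
move=> H; rewrite /dL_dg derive1E /loss derive_val.
have E k : (if k == l then g l else g k) = g k by case: eqP => [->|].
apply: eq_bigr => m _; apply: eq_bigr => j _; rewrite /res.
congr (_ * (_ - _) * - _).
  by apply: eq_bigr => k _; rewrite E.
rewrite (bigD1 l) //= eqxx big1 ?addr0; first by rewrite mulr1.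
by move=> k /negbTE ->; rewrite !mulr0 mul0r mulr0.
Qed.

Lemma dV_val g V l p : dL_dV A Y g V l p =
  \sum_(m < M) 2 * res g V m p * (- (A m l * g l ^+ 2)).
Proof.
have Hq k j : is_derive (V l p) 1
   (fun s : R => if (k == l) && (j == p) then s else V k j)
   (if (k == l) && (j == p) then 1 else 0 : R).
  by case: ((k == l) && (j == p)); [apply: d_id | apply: d_cst].
have := d_sumf (fun m => d_sumf (fun j => d_sq (d_csub (Y m j)
   (d_sumf (fun k => d_cmul (A m k) (d_cmul (g k ^+ 2) (Hq k j))))))).
move=> H; rewrite /dL_dV derive1E /loss derive_val.
have E k j : (if (k == l) && (j == p) then V l p else V k j) = V k j.
  by case: (k =P l) => [->|] //=; case: (j =P p) => [->|].
apply: eq_bigr => m _.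
rewrite (bigD1 p) //= [X in _ + X]big1 ?addr0; last first.
  move=> j /negbTE jp; rewrite [X in _ * - X]big1 ?oppr0 ?mulr0 // => k _.
  by rewrite jp andbF !mulr0.
rewrite /res; congr (_ * (_ - _) * - _).
  by apply: eq_bigr => k _; rewrite E.
rewrite (bigD1 l) //= !eqxx big1 ?addr0; first by rewrite mulr1.
by move=> k /negbTE ->; rewrite !mulr0.
Qed.
End T.
Section U.
Variable R : realType.
Lemma d_sub (f1 f2 : R -> R) (x df1 df2 : R) : is_derive x 1 f1 df1 -> is_derive x 1 f2 df2 ->
  is_derive x 1 (fun s => f1 s - f2 s) (df1 - df2).
Proof.
move=> H1 H2; have := is_deriveB H1 H2.
by have -> : (f1 - f2) = (fun s => f1 s - f2 s) by apply/funext.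
Qed.
Lemma cvg_sumf {T : Type} (F : set_system T) {FF : Filter F} n
  (f : 'I_n -> T -> R) (a : 'I_n -> R) :
  (forall i, f i x @[x --> F] --> a i) ->
  \sum_(i < n) f i x @[x --> F] --> \sum_(i < n) a i.
Proof.
elim: n f a => [|n IH] f a H.
  rewrite big_ord0; under eq_cvg do rewrite big_ord0; exact: cvg_cst.
rewrite big_ord_recr; under eq_cvg do rewrite big_ord_recr /=.
by apply: cvgD; [apply: IH => i; exact: H | exact: H].
Qed.
Lemma cvg_sq {T : Type} (F : set_system T) {FF : Filter F} (f : T -> R) (a : R) :
  f x @[x --> F] --> a -> f x ^+ 2 @[x --> F] --> a ^+ 2.
Proof.
move=> H; rewrite expr2; under eq_cvg do rewrite expr2.
exact: cvgM.
Qed.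
End U.
Unset Implicit Arguments.
Theorem lemma5p1 (R : realType) (M N L : nat) (A : 'M[R]_(M, N)) (Y : 'M[R]_(M, L))
  (g : 'I_N -> R -> R) (V : 'I_N -> 'I_L -> R -> R) :
  gradient_flow A Y g V ->
  forall t : R, 0 <= t ->
    (2^-1 * \sum_(i < N) g i t ^+ 2 - \sum_(i < N) \sum_(j < L) V i j t ^+ 2
     = 2^-1 * \sum_(i < N) g i 0 ^+ 2 - \sum_(i < N) \sum_(j < L) V i j 0 ^+ 2)
    /\
    (forall i : 'I_N,
       2^-1 * g i t ^+ 2 - \sum_(j < L) V i j t ^+ 2
       = 2^-1 * g i 0 ^+ 2 - \sum_(j < L) V i j 0 ^+ 2).
Proof.
move=> [Hgc [HVc [Hgd HVd]]] t t0.
pose h i s := 2^-1 * g i s ^+ 2 - \sum_(j < L) V i j s ^+ 2.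
have row i : h i t = h i 0.
  have cont : {within `[0, t], continuous (h i)}.
    have sub : (`[0, t]%classic : set R) `<=` `[0, +oo[%classic.
      by move=> s; rewrite /= !in_itv /= => /andP[-> _].
    apply: (continuous_subspaceW sub).
    move=> s; apply: cvgB.
      by apply: cvgMl_tmp; apply: cvg_sq; apply: Hgc.
    by apply: cvg_sumf => j; apply: cvg_sq; apply: HVc.
  have der : forall x, x \in `]0, t[ -> is_derive x 1 (h i) (0 : R).
    move=> x; rewrite in_itv /= => /andP[x0 _].
    have [dg eg] := Hgd x x0 i.
    have Gi := derivableP dg; rewrite -derive1E eg dg_val in Gi.
    have Vj : forall j : 'I_L, is_derive x 1 (V i j)
      (- \sum_(m < M) 2 * res A Y (g^~ x) (fun k => (V k)^~ x) m j * (- (A m i * g i x ^+ 2))).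
      move=> j; have [dv ev] := HVd x x0 i j.
      have := derivableP dv; rewrite -derive1E ev dV_val; exact.
    have D := d_sub (d_cmul (2^-1) (d_sq Gi)) (d_sumf (fun j => d_sq (Vj j))).
    apply: is_derive_eq D _.
    set r := res _ _ _ _.
    rewrite -sumrN mulr_sumr mulr_sumr.
    under eq_bigr => m _ do rewrite -sumrN mulr_sumr mulr_sumr.
    under [X in _ - X]eq_bigr => j _ do rewrite -sumrN mulr_sumr.
    rewrite [X in _ - X]exchange_big /= -sumrB big1 // => m _.
    rewrite -sumrB big1 // => j _; by field.
  have [c _] := MVT_segment t0 der cont.
  by rewrite mul0r => /eqP; rewrite subr_eq0 => /eqP.
split; last by move=> i; exact: row.
rewrite !mulr_sumr -!sumrB.
by apply: eq_bigr => i _; apply: row.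
Qed.
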